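(* Let $\mathbb X,\mathbb Y$ be Euclidean spaces, $g\colon\mathbb X\to\mathbb Y$ continuous, $D\subset\mathbb Y$ closed, $\Phi(x):=g(x)-D$, $(\bar x,0)\in\operatorname{gph}\Phi$, $u\in\mathbb S_{\mathbb X}$, and assume $g$ is calm in direction $u$ at $\bar x$. Let $\mathcal E=\{e_1,\dots,e_m\}$ be an orthonormal basis of $\mathbb Y$. Consider condition (N): there do not exist $v\in\mathbb Y$ and a nonzero $\lambda\in\mathcal N_D(g(\bar x);v)$ with $0\in D^*g(\bar x;(u,v))(\lambda)$ for which there are sequences $x_k\in\mathbb X$ with $x_k\ne\bar x$, $z_k\in D$, $\lambda_k\in\mathbb Y$, $\eta_k\in\mathbb X$ satisfying $x_k\to\bar x$, $z_k\to g(\bar x)$, $\lambda_k\to\lambda$, $\eta_k\to0$, $\frac{x_k-\bar x}{\|x_k-\bar x\|}\to u$, $\frac{z_k-g(\bar x)}{\|x_k-\bar x\|}\to v$, $\frac{g(x_k)-g(\bar x)}{\|x_k-\bar x\|}\to v$, and for all $k$ and $i$: $\eta_k\in\widehat D^*g(x_k)(\lambda_k)$, $\lambda_k\in\widehat{\mathcal N}_D(z_k)$, and $\langle\lambda,e_i\rangle\langle g(x_k)-z_k,e_i\rangle>0$ whenever $\langle\lambda,e_i\rangle\ne0$. If (N) holds, then $\Phi$ is quasi-normal in direction $u$ at $(\bar x,0)$ w.r.t. $\mathcal E$. Moreover, if $g$ is calm at every point near $\bar x$, then (N) is equivalent to quasi-normality of $\Phi$ in direction $u$ at $(\bar x,0)$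 w.r.t. $\mathcal E$.
   Context: $g$ is calm at $x$ in direction $u$ if there are $\varepsilon,\delta,L>0$ with $\|g(x')-g(x)\|\le L\|x'-x\|$ for all $x'\in x+\mathbb B_{\varepsilon,\delta}(u)$, where $\mathbb B_{\varepsilon,\delta}(u)=\{w\mid\|\|w\|u-\|u\|w\|\le\delta\|u\|\|w\|,\ \|w\|\le\varepsilon\}$; calm at $x$ means this with $u=0$. $\widehat{\mathcal N}$ is the regular normal cone, $\mathcal N_Q(z;w)$ the directional limiting normal cone (all $\eta$ with $w_k\to w$, $t_k\downarrow0$, $\eta_k\to\eta$, $\eta_k\in\widehat{\mathcal N}_Q(z+t_kw_k)$). For single-valued $g$: $\widehat D^*g(x)(\lambda)=\{x^*\mid(x^*,-\lambda)\in\widehat{\mathcal N}_{\operatorname{gph}g}(x,g(x))\}$ and $D^*g(\bar x;(u,v))(\lambda)=\{x^*\mid(x^*,-\lambda)\in\mathcal N_{\operatorname{gph}g}((\bar x,g(\bar x));(u,v))\}$; for set-valued $\Phi$, $\widehat D^*\Phi$ and $D^*\Phi((\bar x,\bar y);(u,v))$ are defined analogously with $\operatorname{gph}\Phi$. Quasi-normality in direction $u$ at $(\bar x,0)$ w.r.t. $\mathcal E$: there is no nonzero $\lambda$ with $0\in D^*\Phi((\bar x,0);(u,0))(\lambda)$ for which there exist $(x_k,y_k)\in\operatorname{gph}\Phi$ with $x_k\ne\bar x$, $\lambda_k$, $\eta_k$ with $x_k\to\bar x$, $y_k\to0$, $\lambda_k\to\lambda$, $\eta_k\to0$, $\frac{x_k-\bar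 x}{\|x_k-\bar x\|}\to u$, $\frac{y_k}{\|x_k-\bar x\|}\to0$, and for all $k,i$: $\eta_k\in\widehat D^*\Phi(x_k,y_k)(\lambda_k)$ and $\langle\lambda,e_i\rangle\langle y_k,e_i\rangle>0$ whenever $\langle\lambda,e_i\rangle\ne0$. *)

(* Defs.v *)
From HB Require Import structures.
From mathcomp Require Import all_boot all_order all_algebra.
From mathcomp Require Import reals.
Set Implicit Arguments. Unset Strict Implicit. Unset Printing Implicit Defensive.
Import Order.TTheory GRing.Theory Num.Theory.
Local Open Scope ring_scope.

Section Defs.
Variable R : realType.

Definition dotv n (a b : 'rV[R]_n) : R := \sum_(i < n) a ord0 i * b ord0 i.
Definition enorm n (a : 'rV[R]_n) : R := Num.sqrt (dotv a a).

Definition dotp n m (a b : 'rV[R]_n * 'rV[R]_m) : R := dotv a.1 b.1 + dotv a.2 b.2.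
Definition enormp n m (a : 'rV[R]_n * 'rV[R]_m) : R := Num.sqrt (dotp a a).

Definition cvgR (s : nat -> R) (l : R) : Prop :=
  forall eps : R, 0 < eps -> exists N : nat, forall k : nat, (N <= k)%N -> `|s k - l| < eps.
Definition cvgv n (s : nat -> 'rV[R]_n) (l : 'rV[R]_n) : Prop :=
  forall eps : R, 0 < eps -> exists N : nat, forall k : nat, (N <= k)%N -> enorm (s k - l) < eps.
Definition cvgp n m (s : nat -> 'rV[R]_n * 'rV[R]_m) (l : 'rV[R]_n * 'rV[R]_m) : Prop :=
  forall eps : R, 0 < eps -> exists N : nat, forall k : nat, (N <= k)%N ->
    enormp (((s k).1 - l.1), ((s k).2 - l.2)) < eps.

Definition econt n m (g : 'rV[R]_n -> 'rV[R]_m) : Prop :=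
  forall x eps, 0 < eps -> exists delta, 0 < delta /\
    forall x', enorm (x' - x) < delta -> enorm (g x' - g x) < eps.
Definition eclosed m (D : 'rV[R]_m -> Prop) : Prop :=
  forall (s : nat -> 'rV[R]_m) l, (forall k, D (s k)) -> cvgv s l -> D l.

(* regular (Fréchet) normal cone; empty outside the set *)
Definition rnormal n (Q : 'rV[R]_n -> Prop) (z eta : 'rV[R]_n) : Prop :=
  Q z /\ forall eps, 0 < eps -> exists delta, 0 < delta /\
    forall z', Q z' -> enorm (z' - z) < delta -> dotv eta (z' - z) <= eps * enorm (z' - z).
Definition rnormalp n m (Q : 'rV[R]_n * 'rV[R]_m -> Prop)
    (z eta : 'rV[R]_n * 'rV[R]_m) : Prop :=
  Q z /\ forall eps, 0 < eps -> exists delta, 0 < delta /\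
    forall z', Q z' -> enormp (z'.1 - z.1, z'.2 - z.2) < delta ->
      dotp eta (z'.1 - z.1, z'.2 - z.2) <= eps * enormp (z'.1 - z.1, z'.2 - z.2).

Definition dnormal n (Q : 'rV[R]_n -> Prop) (z w eta : 'rV[R]_n) : Prop :=
  exists (wk : nat -> 'rV[R]_n) (tk : nat -> R) (etak : nat -> 'rV[R]_n),
    cvgv wk w /\ (forall k, 0 < tk k) /\ cvgR tk 0 /\ cvgv etak eta /\
    forall k, rnormal Q (z + tk k *: wk k) (etak k).
Definition dnormalp n m (Q : 'rV[R]_n * 'rV[R]_m -> Prop)
    (z w eta : 'rV[R]_n * 'rV[R]_m) : Prop :=
  exists (wk : nat -> 'rV[R]_n * 'rV[R]_m) (tk : nat -> R)
         (etak : nat -> 'rV[R]_n * 'rV[R]_m),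
    cvgp wk w /\ (forall k, 0 < tk k) /\ cvgR tk 0 /\ cvgp etak eta /\
    forall k, rnormalp Q (z.1 + tk k *: (wk k).1, z.2 + tk k *: (wk k).2) (etak k).

Definition gphf n m (g : 'rV[R]_n -> 'rV[R]_m) : 'rV[R]_n * 'rV[R]_m -> Prop :=
  fun p => p.2 = g p.1.
(* Phi(x) = g(x) - D *)
Definition gphPhi n m (g : 'rV[R]_n -> 'rV[R]_m) (D : 'rV[R]_m -> Prop)
  : 'rV[R]_n * 'rV[R]_m -> Prop := fun p => D (g p.1 - p.2).

Definition rcoderf n m (g : 'rV[R]_n -> 'rV[R]_m) (x : 'rV[R]_n) (lam : 'rV[R]_m)
    (xs : 'rV[R]_n) : Prop :=
  rnormalp (gphf g) (x, g x) (xs, - lam).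
Definition dcoderf n m (g : 'rV[R]_n -> 'rV[R]_m) (xb u : 'rV[R]_n) (v lam : 'rV[R]_m)
    (xs : 'rV[R]_n) : Prop :=
  dnormalp (gphf g) (xb, g xb) (u, v) (xs, - lam).
Definition rcoderS n m (G : 'rV[R]_n * 'rV[R]_m -> Prop) (x : 'rV[R]_n) (y lam : 'rV[R]_m)
    (xs : 'rV[R]_n) : Prop :=
  rnormalp G (x, y) (xs, - lam).
Definition dcoderS n m (G : 'rV[R]_n * 'rV[R]_m -> Prop) (xb : 'rV[R]_n) (yb : 'rV[R]_m)
    (u : 'rV[R]_n) (v lam : 'rV[R]_m) (xs : 'rV[R]_n) : Prop :=
  dnormalp G (xb, yb) (u, v) (xs, - lam).

Definition dirball n (eps delta : R) (u w : 'rV[R]_n) : Prop :=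
  enorm (enorm w *: u - enorm u *: w) <= delta * enorm u * enorm w /\ enorm w <= eps.
Definition calm_dir n m (g : 'rV[R]_n -> 'rV[R]_m) (x u : 'rV[R]_n) : Prop :=
  exists eps delta L, 0 < eps /\ 0 < delta /\ 0 < L /\
    forall x', dirball eps delta u (x' - x) -> enorm (g x' - g x) <= L * enorm (x' - x).
Definition calm_at n m (g : 'rV[R]_n -> 'rV[R]_m) (x : 'rV[R]_n) : Prop :=
  calm_dir g x 0.

Definition orthonormal_basis m (e : 'I_m -> 'rV[R]_m) : Prop :=
  forall i j, dotv (e i) (e j) = (i == j)%:R.

Definition quasi_normal_dir n m (G : 'rV[R]_n * 'rV[R]_m -> Prop) (xb u : 'rV[R]_n)
    (e : 'I_m -> 'rV[R]_m) : Prop :=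
  ~ exists lam : 'rV[R]_m, lam != 0 /\ dcoderS G xb 0 u 0 lam 0 /\
    exists (xk : nat -> 'rV[R]_n) (yk : nat -> 'rV[R]_m)
           (lamk : nat -> 'rV[R]_m) (etak : nat -> 'rV[R]_n),
      (forall k, G (xk k, yk k)) /\ (forall k, xk k != xb) /\
      cvgv xk xb /\ cvgv yk 0 /\ cvgv lamk lam /\ cvgv etak 0 /\
      cvgv (fun k => (enorm (xk k - xb))^-1 *: (xk k - xb)) u /\
      cvgv (fun k => (enorm (xk k - xb))^-1 *: yk k) 0 /\
      forall k, rcoderS G (xk k) (yk k) (lamk k) (etak k) /\
        forall i, dotv lam (e i) != 0 -> 0 < dotv lam (e i) * dotv (yk k) (e i).

Definition condN n m (g : 'rV[R]_n -> 'rV[R]_m) (D : 'rV[R]_m -> Prop) (xb u : 'rV[R]_n)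
    (e : 'I_m -> 'rV[R]_m) : Prop :=
  ~ exists (v lam : 'rV[R]_m), lam != 0 /\ dnormal D (g xb) v lam /\ dcoderf g xb u v lam 0 /\
    exists (xk : nat -> 'rV[R]_n) (zk : nat -> 'rV[R]_m)
           (lamk : nat -> 'rV[R]_m) (etak : nat -> 'rV[R]_n),
      (forall k, xk k != xb) /\ (forall k, D (zk k)) /\
      cvgv xk xb /\ cvgv zk (g xb) /\ cvgv lamk lam /\ cvgv etak 0 /\
      cvgv (fun k => (enorm (xk k - xb))^-1 *: (xk k - xb)) u /\
      cvgv (fun k => (enorm (xk k - xb))^-1 *: (zk k - g xb)) v /\
      cvgv (fun k => (enorm (xk k - xb))^-1 *: (g (xk k) - g xb)) v /\
      forall k, rcoderf g (xk k) (lamk k) (etak k) /\ rnormal D (zk k) (lamk k) /\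
        forall i, dotv lam (e i) != 0 -> 0 < dotv lam (e i) * dotv (g (xk k) - zk k) (e i).

End Defs.

(* Main.v *)
Require Import Defs.
From HB Require Import structures.
From mathcomp Require Import all_boot all_order all_algebra.
From mathcomp Require Import reals.
From mathcomp Require Import classical_sets boolp topology normedtype sequences.
From mathcomp Require Import lra.
Import Order.TTheory GRing.Theory Num.Theory.
From mathcomp Require Import ring.
Set Implicit Arguments. Unset Strict Implicit. Unset Printing Implicit Defensive.
Import numFieldNormedType.Exports.
Local Open Scope ring_scope.
Local Open Scope classical_set_scope.

Lemma bw_real (R : realType) (c : nat -> R) (M : R) : (forall k, `|c k| <= M) ->
  exists f : nat -> nat, (forall k, (k <= f k)%N) /\ exists l, cvgR (fun k => c (f k)) l.
Proof.
move=> cM.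
have bc : bounded_fun c.
  rewrite /= /bounded_near; near=> X => k _ /=; apply: le_trans (cM k) _.
  by near: X; apply: nbhs_pinfty_ge; exact: num_real.
have [f fi fc] := bolzano_weierstrass bc.
exists f; split.
  elim=> [|k IH]; first by [].
  have : ~~ (f k.+1 <= f k)%N by have := fi k.+1 k; rewrite leEnat => ->; rewrite ltnn.
  rewrite -ltnNge => h; exact: leq_ltn_trans IH h.
move: fc => /cvg_ex [l /cvgrPdist_lt H]; exists l => eps e0.
have := H eps e0. case=> N _ HN. exists N => k Nk.
rewrite distrC; exact: (HN k Nk).
Unshelve. all: by end_near. Qed.
Section Norms.
Variable R : realType.
Variable n : nat.
Implicit Types a b c : 'rV[R]_n.

Lemma dotvC a b : dotv a b = dotv b a.
Proof. by apply: eq_bigr => i _; rewrite mulrC. Qed.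
Lemma dotvDl a b c : dotv (a + b) c = dotv a c + dotv b c.
Proof. by rewrite /dotv -big_split; apply: eq_bigr => i _; rewrite mxE mulrDl. Qed.
Lemma dotvZl (k : R) a b : dotv (k *: a) b = k * dotv a b.
Proof. by rewrite /dotv mulr_sumr; apply: eq_bigr => i _; rewrite mxE mulrA. Qed.
Lemma dotvNl a b : dotv (- a) b = - dotv a b.
Proof. by rewrite -scaleN1r dotvZl mulN1r. Qed.
Lemma dotvBl a b c : dotv (a - b) c = dotv a c - dotv b c.
Proof. by rewrite dotvDl dotvNl. Qed.
Lemma dotvDr a b c : dotv a (b + c) = dotv a b + dotv a c.
Proof. by rewrite dotvC dotvDl !(dotvC a). Qed.
Lemma dotvZr (k : R) a b : dotv a (k *: b) = k * dotv a b.
Proof. by rewrite dotvC dotvZl dotvC. Qed.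
Lemma dotvNr a b : dotv a (- b) = - dotv a b.
Proof. by rewrite dotvC dotvNl dotvC. Qed.
Lemma dotvBr a b c : dotv a (b - c) = dotv a b - dotv a c.
Proof. by rewrite dotvDr dotvNr. Qed.
Lemma dotv0l a : dotv 0 a = 0.
Proof. by rewrite /dotv big1 // => i _; rewrite mxE mul0r. Qed.
Lemma dotv0r a : dotv a 0 = 0.
Proof. by rewrite dotvC dotv0l. Qed.
Lemma dotv_ge0 a : 0 <= dotv a a.
Proof. by apply: sumr_ge0 => i _; rewrite -expr2 sqr_ge0. Qed.
Lemma sq_le_dotv a i : a ord0 i ^+ 2 <= dotv a a.
Proof.
rewrite /dotv (bigD1 i) //= expr2.
by rewrite lerDl; apply: sumr_ge0 => j _; rewrite -expr2 sqr_ge0.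
Qed.
Lemma dotv_eq0 a : dotv a a = 0 -> a = 0.
Proof.
move=> h; apply/rowP => i; rewrite mxE.
have := sq_le_dotv a i; rewrite h => h2.
have : a ord0 i ^+ 2 = 0 by apply/eqP; rewrite eq_le h2 sqr_ge0.
by move/eqP; rewrite sqrf_eq0 => /eqP.
Qed.

Lemma enorm_ge0 a : 0 <= enorm a.
Proof. exact: sqrtr_ge0. Qed.
Lemma enorm_sq a : enorm a ^+ 2 = dotv a a.
Proof. by rewrite sqr_sqrtr // dotv_ge0. Qed.
Lemma enorm_le a (c : R) : 0 <= c -> dotv a a <= c ^+ 2 -> enorm a <= c.
Proof.
move=> c0 h; have := enorm_ge0 a; have := enorm_sq a => e g.
rewrite -(ler_pXn2r (_ : (0 < 2)%N)) ?nnegrE //; by rewrite e.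
Qed.
Lemma enorm_lt a (c : R) : 0 <= c -> dotv a a < c ^+ 2 -> enorm a < c.
Proof.
move=> c0 h; have := enorm_ge0 a; have := enorm_sq a => e g.
rewrite -(ltr_pXn2r (_ : (0 < 2)%N)) ?nnegrE //; by rewrite e.
Qed.
Lemma enorm0 : enorm (0 : 'rV[R]_n) = 0.
Proof. by rewrite /enorm dotv0l sqrtr0. Qed.
Lemma enorm_eq0 a : enorm a = 0 -> a = 0.
Proof. by move=> h; apply: dotv_eq0; rewrite -enorm_sq h expr0n. Qed.
Lemma enormZ (k : R) a : enorm (k *: a) = `|k| * enorm a.
Proof.
by rewrite /enorm dotvZl dotvZr mulrA -expr2 sqrtrM ?sqr_ge0 // sqrtr_sqr.
Qed.
Lemma enormN a : enorm (- a) = enorm a.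
Proof. by rewrite -scaleN1r enormZ normrN normr1 mul1r. Qed.
Lemma enormB a b : enorm (a - b) = enorm (b - a).
Proof. by rewrite -enormN opprB. Qed.

Lemma cauchy_schwarz a b : dotv a b ^+ 2 <= dotv a a * dotv b b.
Proof.
have [b0|bpos] := eqVneq (dotv b b) 0.
  by rewrite (dotv_eq0 b0) !dotv0r mulr0 expr0n.
have bb : 0 < dotv b b by rewrite lt_def bpos dotv_ge0.
set t := - (dotv a b / dotv b b).
have h := dotv_ge0 (a + t *: b).
rewrite dotvDl !dotvDr !dotvZl !dotvZr (dotvC b a) in h.
have ht : t * dotv b b = - dotv a b by rewrite /t mulNr divfK.
have : 0 <= (dotv a a + t * dotv a b + (t * dotv a b + t * (t * dotv b b))) * dotv b b.
  by apply: mulr_ge0 => //; exact: ltW.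
rewrite ht. have -> : (dotv a a + t * dotv a b + (t * dotv a b + t * - dotv a b)) * dotv b b
   = dotv a a * dotv b b + dotv a b * (t * dotv b b) by ring.
by rewrite ht; nra.
Qed.

Lemma dotv_le a b : dotv a b <= enorm a * enorm b.
Proof.
have := cauchy_schwarz a b; rewrite -!enorm_sq => h.
apply: le_trans (ler_norm _) _.
rewrite -(ler_pXn2r (_ : (0 < 2)%N)) ?nnegrE ?mulr_ge0 ?enorm_ge0 //.
by rewrite real_normK ?num_real // exprMn.
Qed.

Lemma enormD a b : enorm (a + b) <= enorm a + enorm b.
Proof.
apply: enorm_le; first by rewrite addr_ge0 ?enorm_ge0.
rewrite dotvDl !dotvDr (dotvC b a) -!enorm_sq.
have := dotv_le a b; nra.
Qed.

Lemma coord_le a i : `|a ord0 i| <= enorm a.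
Proof.
rewrite -(ler_pXn2r (_ : (0 < 2)%N)) ?nnegrE ?enorm_ge0 //.
by rewrite enorm_sq real_normK ?num_real // sq_le_dotv.
Qed.

Lemma enorm_coord a (d : R) : 0 <= d -> (forall i, `|a ord0 i| <= d) -> dotv a a <= n%:R * d ^+ 2.
Proof.
move=> d0 h; rewrite /dotv.
have -> : n%:R * d ^+ 2 = \sum_(i < n) d ^+ 2 by rewrite sumr_const card_ord mulr_natl.
apply: ler_sum => i _; rewrite -expr2 -real_normK ?num_real //.
by rewrite ler_pXn2r ?nnegrE ?normr_ge0.
Qed.
End Norms.

Section NormP.
Variable R : realType.
Variables n m : nat.
Lemma enormp_sq (a : 'rV[R]_n) (b : 'rV[R]_m) : enormp (a, b) ^+ 2 = enorm a ^+ 2 + enorm b ^+ 2.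
Proof. by rewrite /enormp sqr_sqrtr ?enorm_sq // addr_ge0 ?dotv_ge0. Qed.
Lemma enormp_ge0 (a : 'rV[R]_n) (b : 'rV[R]_m) : 0 <= enormp (a, b).
Proof. exact: sqrtr_ge0. Qed.
Lemma enormp_l (a : 'rV[R]_n) (b : 'rV[R]_m) : enorm a <= enormp (a, b).
Proof.
rewrite -(ler_pXn2r (_ : (0 < 2)%N)) ?nnegrE ?enorm_ge0 ?enormp_ge0 //.
by rewrite enormp_sq lerDl sqr_ge0.
Qed.
Lemma enormp_r (a : 'rV[R]_n) (b : 'rV[R]_m) : enorm b <= enormp (a, b).
Proof.
rewrite -(ler_pXn2r (_ : (0 < 2)%N)) ?nnegrE ?enorm_ge0 ?enormp_ge0 //.
by rewrite enormp_sq lerDr sqr_ge0.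
Qed.
Lemma enormp_le (a : 'rV[R]_n) (b : 'rV[R]_m) : enormp (a, b) <= enorm a + enorm b.
Proof.
rewrite -(ler_pXn2r (_ : (0 < 2)%N)) ?nnegrE ?addr_ge0 ?enorm_ge0 ?enormp_ge0 //.
rewrite enormp_sq; have := enorm_ge0 a; have := enorm_ge0 b; nra.
Qed.
End NormP.

Section Conv.
Variable R : realType.

Lemma cvgv_sub n (s : nat -> 'rV[R]_n) l (f : nat -> nat) :
  (forall k, (k <= f k)%N) -> cvgv s l -> cvgv (fun k => s (f k)) l.
Proof.
move=> hf cs eps e0; have [N HN] := cs eps e0; exists N => k Nk.
by apply: HN; apply: leq_trans Nk (hf k).
Qed.

Lemma cvgR_sub (s : nat -> R) l (f : nat -> nat) :
  (forall k, (k <= f k)%N) -> cvgR s l -> cvgR (fun k => s (f k)) l.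
Proof.
move=> hf cs eps e0; have [N HN] := cs eps e0; exists N => k Nk.
by apply: HN; apply: leq_trans Nk (hf k).
Qed.

Lemma cvgv_ext n (s s' : nat -> 'rV[R]_n) l :
  (forall k, s k = s' k) -> cvgv s l -> cvgv s' l.
Proof.
move=> e cs eps e0; have [N HN] := cs eps e0; exists N => k Nk.
by rewrite -e; apply: HN.
Qed.

Lemma cvgv_lim n (s : nat -> 'rV[R]_n) l l' : l = l' -> cvgv s l -> cvgv s l'.
Proof. by move=> ->. Qed.

Lemma cvgvD n (s s' : nat -> 'rV[R]_n) l l' :
  cvgv s l -> cvgv s' l' -> cvgv (fun k => s k + s' k) (l + l').
Proof.
move=> cs cs' eps e0.
have e2 : 0 < eps / 2 by rewrite divr_gt0.
have [N HN] := cs _ e2; have [N' HN'] := cs' _ e2.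
exists (maxn N N') => k; rewrite geq_max => /andP [h1 h2].
have -> : s k + s' k - (l + l') = (s k - l) + (s' k - l').
  by rewrite opprD addrACA.
apply: le_lt_trans (enormD _ _) _.
have := HN k h1; have := HN' k h2; lra.
Qed.

Lemma cvgvN n (s : nat -> 'rV[R]_n) l :
  cvgv s l -> cvgv (fun k => - s k) (- l).
Proof.
move=> cs eps e0; have [N HN] := cs eps e0; exists N => k Nk.
by rewrite -opprD enormN; apply: HN.
Qed.

Lemma cvgvB n (s s' : nat -> 'rV[R]_n) l l' :
  cvgv s l -> cvgv s' l' -> cvgv (fun k => s k - s' k) (l - l').
Proof. by move=> cs cs'; apply: cvgvD => //; apply: cvgvN. Qed.

Lemma cvgv_enorm n (s : nat -> 'rV[R]_n) l :
  cvgv s l -> cvgR (fun k => enorm (s k - l)) 0.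
Proof.
move=> cs eps e0; have [N HN] := cs eps e0; exists N => k Nk.
by rewrite subr0 ger0_norm ?enorm_ge0 //; apply: HN.
Qed.

Lemma cvgv_cont n m (g : 'rV[R]_n -> 'rV[R]_m) (s : nat -> 'rV[R]_n) l :
  econt g -> cvgv s l -> cvgv (fun k => g (s k)) (g l).
Proof.
move=> cg cs eps e0; have [d [d0 hd]] := cg l eps e0.
have [N HN] := cs d d0; exists N => k Nk; exact: hd (HN k Nk).
Qed.

Lemma cvgp_pair n m (a : nat -> 'rV[R]_n) (b : nat -> 'rV[R]_m) A B :
  cvgv a A -> cvgv b B -> cvgp (fun k => (a k, b k)) (A, B).
Proof.
move=> ca cb eps e0.
have e2 : 0 < eps / 2 by rewrite divr_gt0.
have [N HN] := ca _ e2; have [N' HN'] := cb _ e2.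
exists (maxn N N') => k; rewrite geq_max => /andP [h1 h2] /=.
apply: le_lt_trans (enormp_le _ _) _.
have := HN k h1; have := HN' k h2; lra.
Qed.

Lemma bw_vec m (q : nat -> 'rV[R]_m) (M : R) : (forall k, enorm (q k) <= M) ->
  exists f : nat -> nat, (forall k, (k <= f k)%N) /\ exists v, cvgv (fun k => q (f k)) v.
Proof.
move=> qM.
have H : forall s : seq 'I_m, exists f : nat -> nat, (forall k, (k <= f k)%N) /\
    forall i, i \in s -> exists l, cvgR (fun k => q (f k) ord0 i) l.
  elim => [|i s [f [hf IH]]]; first by exists id.
  have [h [hh [l hl]]] := @bw_real R (fun k => q (f k) ord0 i) M
     (fun k => le_trans (coord_le _ _) (qM _)).
  exists (fun k => f (h k)); split; first by move=> k; apply: leq_trans (hh k) (hf _).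
  move=> j; rewrite in_cons => /orP [/eqP -> | js]; first by exists l.
  have [l' hl'] := IH j js; exists l'; exact: (cvgR_sub hh hl').
have [f [hf Hf]] := H (enum 'I_m).
have [l hl] : exists l : 'I_m -> R, forall i, cvgR (fun k => q (f k) ord0 i) (l i).
  by apply: (@fin_all_exists _ (fun=> R) (fun i (x : R) => cvgR (fun k => q (f k) ord0 i) x)) => i; apply: Hf; rewrite mem_enum.
exists f; split => //; exists (\row_i l i) => eps e0.
set d := eps / (m%:R + 1).
have m0 : 0 <= m%:R :> R by [].
have d0 : 0 < d by rewrite divr_gt0 // ltr_wpDl.
have [N hN] : exists N : 'I_m -> nat, forall i k, (N i <= k)%N -> `|q (f k) ord0 i - l i| < d.
  by apply: (@fin_all_exists _ (fun=> nat) (fun i (N : nat) => forall k, (N <= k)%N -> `|q (f k) ord0 i - l i| < d)) => i; exact: (hl i d d0).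
exists (\max_i N i) => k hk.
apply: enorm_lt; first exact: ltW.
apply: le_lt_trans (enorm_coord (ltW d0) _) _.
  move=> i; rewrite !mxE; apply: ltW; apply: hN.
  by apply: leq_trans hk; apply: leq_bigmax.
have hd : d * (m%:R + 1) = eps by rewrite /d divfK // gt_eqF // ltr_wpDl.
rewrite -hd; nra.
Qed.

End Conv.

Section ABC.
Variable R : realType.
Variables n m : nat.
Variable g : 'rV[R]_n -> 'rV[R]_m.
Variable D : 'rV[R]_m -> Prop.

Lemma lemA x y lam eta : rcoderS (gphPhi g D) x y lam eta -> rnormal D (g x - y) lam.
Proof.
move=> [Q H]; split => // eps e0.
have [d [d0 hd]] := H eps e0; exists d; split => // z' Dz' hz'.
have := hd (x, g x - z') _ _ => /=.
have -> : g x - z' - y = - (z' - (g x - y)) by rewrite opprB addrAC.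
rewrite subrr /dotp /= dotv0r add0r dotvNl dotvNr opprK.
have E : enormp (0 : 'rV[R]_n, - (z' - (g x - y))) = enorm (z' - (g x - y)).
  by rewrite /enormp /dotp /= dotv0r add0r dotvNl dotvNr opprK.
move=> h; rewrite -E; apply: h.
- by rewrite /gphPhi /= opprB addrC subrK.
- by rewrite E.
Qed.

Lemma lemB x y lam eta : rcoderS (gphPhi g D) x y lam eta -> rcoderf g x lam eta.
Proof.
move=> [Q H]; split => //.
move=> eps e0; have [d [d0 hd]] := H eps e0; exists d; split => // [[x' y']]; rewrite /gphf /= => -> hz.
have := hd (x', g x' - (g x - y)).
have -> : g x' - (g x - y) - y = g x' - g x by rewrite opprB addrA addrAC addrK.
apply => //.
by rewrite /gphPhi /= opprB addrC subrK.
Qed.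

Lemma lemC x y lam eta : calm_at g x -> rcoderf g x lam eta -> rnormal D (g x - y) lam ->
  rcoderS (gphPhi g D) x y lam eta.
Proof.
move=> [e0 [d0 [L [e00 [d00 [L0 hc]]]]]] [_ H1] [Dz H2].
have calm : forall x', enorm (x' - x) <= e0 -> enorm (g x' - g x) <= L * enorm (x' - x).
  move=> x' hx'; apply: hc; split => //.
  by rewrite scaler0 enorm0 scale0r subr0 enorm0 mulr0 mul0r.
split => // eps eps0.
set e := eps / (2 * (1 + 2 * L)).
have hL : 0 < 2 * (1 + 2 * L) by lra.
have e0' : 0 < e by rewrite divr_gt0.
have he : e * (2 * (1 + 2 * L)) = eps by rewrite /e divfK // gt_eqF.
have [d1 [d10 hd1]] := H1 e e0'.
have [d2 [d20 hd2]] := H2 e e0'.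
have hL1 : 0 < 1 + L by lra.
exists (Num.min e0 (Num.min d1 d2 / (1 + L))); split.
  by rewrite lt_min e00 divr_gt0 // lt_min d10 d20.
move=> [x' y'] /= Gz; rewrite lt_min => /andP [hP1 hP2].
set P := enormp (x' - x, y' - y).
have ha : enorm (x' - x) <= P by apply: enormp_l.
have hb : enorm (y' - y) <= P by apply: enormp_r.
have hP0 : 0 <= P by apply: enormp_ge0.
have hm1 : Num.min d1 d2 <= d1 by rewrite ge_min lexx.
have hm2 : Num.min d1 d2 <= d2 by rewrite ge_min lexx orbT.
have hP3 : P * (1 + L) < Num.min d1 d2 by rewrite -ltr_pdivlMr.
have hcal := calm x' (ltW (le_lt_trans ha hP1)).
have ha0 := enorm_ge0 (x' - x).
have hb0 := enorm_ge0 (y' - y).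
have hg0 := enorm_ge0 (g x' - g x).
have i1 := hd1 (x', g x') erefl.
have : enormp ((x', g x').1 - (x, g x).1, (x', g x').2 - (x, g x).2) < d1.
  apply: le_lt_trans (enormp_le _ _) _ => /=; nra.
move=> /i1 {i1} /= i1.
have ezz : (g x' - y') - (g x - y) = (g x' - g x) - (y' - y).
  by rewrite !opprB addrACA [in RHS]addrACA; congr (_ + _); exact: addrC.
have hzz : enorm ((g x' - y') - (g x - y)) <= L * enorm (x' - x) + enorm (y' - y).
  rewrite ezz; apply: le_trans (enormD _ _) _; rewrite enormN; lra.
have i2 := hd2 (g x' - y') Gz.
have : enorm ((g x' - y') - (g x - y)) < d2 by nra.
move=> /i2 {i2} i2.
rewrite ezz dotvBr in i2.
rewrite ezz in hzz.
have hEP : enormp (x' - x, g x' - g x) <= (1 + L) * enorm (x' - x).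
  by apply: le_trans (enormp_le _ _) _; lra.
move: i1; rewrite /dotp /= !dotvNl => i1.
rewrite /dotp /=.
have j1 := ler_wpM2l (ltW e0') hEP.
have j2 := ler_wpM2l (ltW e0') hzz.
have j3 : (1 + L) * enorm (x' - x) + (L * enorm (x' - x) + enorm (y' - y)) <= (2 * (1 + 2 * L)) * P.
  by nra.
have j4 := ler_wpM2l (ltW e0') j3.
rewrite -he; lra.
Qed.
End ABC.

Section Parts.
Variable R : realType.
Variables n m : nat.

Lemma scaleK (t : R) k (b : 'rV[R]_k) : t != 0 -> t *: (t^-1 *: b) = b.
Proof. by move=> t0; rewrite scalerA mulfV // scale1r. Qed.

Lemma scaleK2 (t : R) k (a b : 'rV[R]_k) : t != 0 -> a + t *: (t^-1 *: (b - a)) = b.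
Proof. by move=> t0; rewrite scaleK // addrC subrK. Qed.

Lemma enorm_gt0 k (a b : 'rV[R]_k) : a != b -> 0 < enorm (a - b).
Proof.
move=> ab; rewrite lt_def enorm_ge0 andbT; apply/eqP => /enorm_eq0 /eqP.
by rewrite subr_eq0 (negbTE ab).
Qed.

Variable g : 'rV[R]_n -> 'rV[R]_m.
Variable D : 'rV[R]_m -> Prop.

Lemma part1 xb u e : econt g -> enorm u = 1 -> calm_dir g xb u ->
  condN g D xb u e -> quasi_normal_dir (gphPhi g D) xb u e.
Proof.
move=> cont u1 [ce [cd [L [ce0 [cd0 [L0 hcalm]]]]]] hN.
move=> [lam [lam0 [_ [xk [yk [lamk [etak [HG [Hne [cx [cy [cl [ce' [cw [cyt Hk]]]]]]]]]]]]]]].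
apply: hN.
pose t k := enorm (xk k - xb).
have tpos : forall k, 0 < t k by move=> k; apply: enorm_gt0.
have tn0 : forall k, t k != 0 by move=> k; rewrite gt_eqF.
pose q k := (t k)^-1 *: (g (xk k) - g xb).
have [N HN] : exists N, forall k, (N <= k)%N -> enorm (q k) <= L.
  have [N1 H1] := cx ce ce0.
  have [N2 H2] := cw cd cd0.
  exists (maxn N1 N2) => k; rewrite geq_max => /andP [k1 k2].
  have hb : enorm (g (xk k) - g xb) <= L * t k.
    apply: hcalm; split; last exact: ltW (H1 k k1).
    rewrite u1 mulr1 -/(t k).
    have -> : t k *: u - 1 *: (xk k - xb) = t k *: (u - (t k)^-1 *: (xk k - xb)).
      by rewrite scale1r scalerBr scaleK.
    rewrite enormZ ger0_norm ?(ltW (tpos k)) // mulrC enormB.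
    by apply: ler_wpM2r; [exact: ltW (tpos k) | exact: ltW (H2 k k2)].
  rewrite /q enormZ ger0_norm ?invr_ge0 ?(ltW (tpos k)) //.
  by rewrite ler_pdivrMl // mulrC.
have [f [hf [v cv]]] := @bw_vec R m (fun k => q (k + N)) L (fun k => HN _ (leq_addl _ _)).
pose p k := (f k + N)%N.
have hp : forall k, (k <= p k)%N by move=> k; apply: leq_trans (hf k) (leq_addr _ _).
pose X k := xk (p k). pose Y k := yk (p k). pose Z k := g (X k) - Y k. pose T k := t (p k).
have cv' : cvgv (fun k => q (p k)) v by [].
have cYT : cvgv (fun k => (T k)^-1 *: Y k) 0 := cvgv_sub hp cyt.
have cZ : cvgv (fun k => (T k)^-1 *: (Z k - g xb)) v.
  apply: (@cvgv_ext _ _ (fun k => q (p k) - (T k)^-1 *: Y k)).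
    move=> k; rewrite /q /Z /T /X /Y -scalerBr; congr (_ *: _).
    exact: addrAC.
  by apply: (cvgv_lim (subr0 v)); apply: cvgvB.
have cT : cvgR T 0 := cvgR_sub hp (cvgv_enorm cx).
have cX : cvgv X xb := cvgv_sub hp cx.
have cL : cvgv (fun k => lamk (p k)) lam := cvgv_sub hp cl.
have cE : cvgv (fun k => etak (p k)) 0 := cvgv_sub hp ce'.
have cW : cvgv (fun k => (T k)^-1 *: (X k - xb)) u := cvgv_sub hp cw.
have hA : forall k, rnormal D (Z k) (lamk (p k)) by move=> k; exact: lemA (Hk (p k)).1.
have hB : forall k, rcoderf g (X k) (lamk (p k)) (etak (p k)) by move=> k; exact: lemB (Hk (p k)).1.
exists v, lam; split => //; split.
  exists (fun k => (T k)^-1 *: (Z k - g xb)), T, (fun k => lamk (p k)).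
  split; first exact: cZ.
  split; first by move=> k; exact: tpos.
  split; first exact: cT.
  split; first exact: cL.
  by move=> k; rewrite scaleK2 ?tn0 //; exact: hA.
split.
  exists (fun k => ((T k)^-1 *: (X k - xb), q (p k))), T, (fun k => (etak (p k), - lamk (p k))).
  split; first exact: cvgp_pair.
  split; first by move=> k; exact: tpos.
  split => //; split; first by apply: cvgp_pair => //; apply: cvgvN.
  move=> k /=; rewrite scaleK2 ?tn0 // /q -/(T k) scaleK2 ?tn0 //; exact: hB.
exists X, Z, (fun k => lamk (p k)), (fun k => etak (p k)).
split; first by move=> k; exact: Hne.
split; first by move=> k; exact: HG.
split; first exact: cX.
split; first by apply: (cvgv_lim (subr0 (g xb))); apply: cvgvB; [exact: cvgv_cont | exact: cvgv_sub hp cy].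
split; first exact: cL.
split; first exact: cE.
split; first exact: cW.
split; first exact: cZ.
split; first exact: cv'.
move=> k; split => //; split => // i /((Hk (p k)).2 i).
by rewrite /Z opprB addrC subrK.
Qed.

Lemma part2 xb u e : econt g ->
  (exists r : R, 0 < r /\ forall x, enorm (x - xb) < r -> calm_at g x) ->
  quasi_normal_dir (gphPhi g D) xb u e -> condN g D xb u e.
Proof.
move=> cont [r [r0 hcal]] hQ.
move=> [v [lam [lam0 [_ [_ [xk [zk [lamk [etak [Hne [HD [cx [cz [cl [ce' [cw [czt [cq Hk]]]]]]]]]]]]]]]]]].
apply: hQ.
have [N HN] := cx r r0.
pose p k := (k + N)%N.
have hp : forall k, (k <= p k)%N by move=> k; exact: leq_addr.
pose t k := enorm (xk k - xb).
have tpos : forall k, 0 < t k by move=> k; apply: enorm_gt0.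
have tn0 : forall k, t k != 0 by move=> k; rewrite gt_eqF.
pose X k := xk (p k). pose Y k := g (X k) - zk (p k). pose T k := t (p k).
have cYT : cvgv (fun k => (T k)^-1 *: Y k) 0.
  apply: (@cvgv_ext _ _ (fun k => (T k)^-1 *: (g (X k) - g xb) - (T k)^-1 *: (zk (p k) - g xb))).
    move=> k; rewrite /Y -scalerBr; congr (_ *: _).
    by rewrite opprB addrA subrK.
  apply: (cvgv_lim (subrr v)); apply: cvgvB; [exact: cvgv_sub hp cq | exact: cvgv_sub hp czt].
have hC : forall k, rcoderS (gphPhi g D) (X k) (Y k) (lamk (p k)) (etak (p k)).
  move=> k; have [h1 [h2 _]] := Hk (p k); apply: lemC.
  - by apply: hcal; apply: HN; exact: leq_addl.
  - exact: h1.
  - by rewrite /Y opprB addrC subrK.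
exists lam; split => //; split.
  exists (fun k => ((T k)^-1 *: (X k - xb), (T k)^-1 *: Y k)), T, (fun k => (etak (p k), - lamk (p k))).
  split; first by apply: cvgp_pair => //; exact: cvgv_sub hp cw.
  split; first by move=> k; exact: tpos.
  split; first exact: cvgR_sub hp (cvgv_enorm cx).
  split; first by apply: cvgp_pair; [exact: cvgv_sub hp ce' | apply: cvgvN; exact: cvgv_sub hp cl].
  move=> k /=; rewrite scaleK2 ?tn0 // scaleK ?tn0 // add0r; exact: hC.
exists X, Y, (fun k => lamk (p k)), (fun k => etak (p k)).
split; first by move=> k; rewrite /gphPhi /Y /= opprB addrC subrK; exact: HD.
split; first by move=> k; exact: Hne.
split; first exact: cvgv_sub hp cx.
split; first by apply: (cvgv_lim (subrr (g xb))); apply: cvgvB; [apply: cvgv_cont => //; exact: cvgv_sub hp cx | exact: cvgv_sub hp cz].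
split; first exact: cvgv_sub hp cl.
split; first exact: cvgv_sub hp ce'.
split; first exact: cvgv_sub hp cw.
split => // k; split; first exact: hC.
exact: (Hk (p k)).2.2.
Qed.
End Parts.

Theorem proposition5p13 (R : realType) (n m : nat)
    (g : 'rV[R]_n -> 'rV[R]_m) (D : 'rV[R]_m -> Prop) (xb u : 'rV[R]_n)
    (e : 'I_m -> 'rV[R]_m) :
  econt g -> eclosed D -> D (g xb) -> enorm u = 1 -> calm_dir g xb u ->
  orthonormal_basis e ->
  (condN g D xb u e -> quasi_normal_dir (gphPhi g D) xb u e) /\
  ((exists r : R, 0 < r /\ forall x, enorm (x - xb) < r -> calm_at g x) ->
   (condN g D xb u e <-> quasi_normal_dir (gphPhi g D) xb u e)).
Proof.
move=> cont _ _ u1 hc _; split; first exact: part1.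
move=> hr; split; first exact: part1.
exact: part2.
Qed.
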